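(* Let $T=(V,E,r)$ be a finite rooted tree embedded in $\mathbb R^n$ as described in the context, and let $i,j,k$ be three adjacent nodes with $i<j$ and $i<k$, $j\neq k$ (i.e. $j$ and $k$ are distinct children of $i$). Assume: (A2) for all $x,x'\in[x_i,x_j]$ and $y,y'\in[x_i,x_k]$, $\ell([x_i,x])+\ell([x_i,y])\le\ell([x_i,x'])+\ell([x_i,y'])\Rightarrow\|\vec t(x)-\vec t(y)\|\le\|\vec t(x')-\vec t(y')\|$; (A3) there exist a neighborhood $U_i$ of $x_i$ and $0<a<2$ such that for all $x\in U_i\cap([x_i,x_j]\cup[x_i,x_k])$, $\|\vec t(x)-\vec t(x_i)\|\ge\ell([x_i,x])^a$. Then $$\langle\mu_{[x_i,x_j]},\mu_{[x_i,x_k]}\rangle_{W^\ast}=o\Big(\|\mu_{[x_i,x_j]}\|^2_{W^\ast}+\|\mu_{[x_i,x_k]}\|^2_{W^\ast}\Big)$$ as $\sigma_x,\sigma_t\to0$ with $\sigma_x\asymp\sigma_t$, where $\sigma_x\asymp\sigma_t$ means there exist constants $k_1,k_2>0$ with $k_1\sigma_x\le\sigma_t\le k_2\sigma_x$.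
   Context: Rooted tree and embedding. $T=(V,E,r)$ is a finite rooted tree with root $r$; $i<j$ means $i$ is the parent of $j$. The tree is embedded in $\mathbb R^n$ via an injective map $i\mapsto x_i\in\mathbb R^n$ and a map sending each edge $(i,j)$ to a smooth curve segment $[x_i,x_j]$ joining $x_i$ and $x_j$ (not necessarily a line segment); embeddings of two edges intersect only if the edges share a node, and only at the image of that node. The embedding of the path from $r$ to any node is a smooth, regular curve of finite length, oriented from the root to the end node; $[x,y]$ denotes the sub-arc between two points on a common embedded root-to-node path. $\ell(\gamma)$ is arc length, $\vec t(x)\in\mathbb S^{n-1}$ the unit oriented tangent vector at $x$ of the curve under consideration. For $\sigma_x,\sigma_t>0$ and smooth oriented curves $X,Y$ of finite length, $$\langle\mu_X,\mu_Y\rangle_{W^\ast}=\iint_{X\times Y} e^{-\|x-y\|^2/\sigma_x^2}\,e^{-\|\vec t(x)-\vec t(y)\|^2/\sigma_t^2}\,d\ell(x)\,d\ell(y),\qquad \|\mu_X\|^2_{W^\ast}=\langle\mu_X,\mu_X\rangle_{W^\ast}$$ (the oriented-varifold inner product induced by the Gaussian tensor-product kernel with parameters $\sigma_x,\sigma_t$). *)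

(* Defs.v *)
From Stdlib Require Import Reals Lra List.
From Coquelicot Require Import Coquelicot.
Import ListNotations.
Open Scope R_scope.

(** Points of R^n are represented as functions nat -> R; only the
    coordinates m < n are meaningful. *)
Definition point := nat -> R.

Definition pt_eq (n : nat) (p q : point) : Prop :=
  forall m, (m < n)%nat -> p m = q m.

Definition dist2 (n : nat) (p q : point) : R :=
  fold_right Rplus 0 (map (fun m => (p m - q m) ^ 2) (seq 0 n)).
Definition edist (n : nat) (p q : point) : R := sqrt (dist2 n p q).

Definition curve := R -> point.

(** (oriented) tangent vector = velocity; for arc-length parametrized
    curves this is the unit tangent. *)
Definition tvec (c : curve) (s : R) : point :=
  fun m => Derive (fun t => c t m) s.

Definition zero_pt : point := fun _ => 0.

Definition smooth_fun (f : R -> R) : Prop :=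
  forall (q : nat) (x : R), ex_derive_n f q x.

Fixpoint iter_par {V : Type} (par : V -> option V) (m : nat) (v : V) : option V :=
  match m with
  | O => Some v
  | S m' => match iter_par par m' v with Some w => par w | None => None end
  end.

Record rooted_tree := mkTree {
  node : Type;
  nodes : list node;
  nodes_complete : forall v, In v nodes;
  root : node;
  parent : node -> option node;                   (* parent i of j, i.e. i < j *)
  parent_root : parent root = None;
  parent_nonroot : forall v, v <> root -> parent v <> None;
  reaches_root : forall v, exists m, iter_par parent m v = Some root
}.

(** ---------- embedding of a rooted tree in R^n ----------
    Each non-root node v with parent p carries the edge (p,v), embedded as
    the curve [earc v] restricted to [0, elen v], parametrized by arc length
    and oriented from x_p to x_v (i.e. away from the root). *)
Record tree_embedding (n : nat) (T : rooted_tree) := mkEmb {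
  npos : node T -> point;
  pos_inj : forall u v, pt_eq n (npos u) (npos v) -> u = v;
  earc : node T -> curve;
  elen : node T -> R;
  edge_ok : forall v p, parent T v = Some p ->
    0 < elen v
    /\ (forall m, (m < n)%nat -> smooth_fun (fun s => earc v s m))
    /\ (forall s, 0 <= s <= elen v -> dist2 n (tvec (earc v) s) zero_pt = 1)
    /\ pt_eq n (earc v 0) (npos p)
    /\ pt_eq n (earc v (elen v)) (npos v)
    /\ (forall s u, 0 <= s <= elen v -> 0 <= u <= elen v ->
          pt_eq n (earc v s) (earc v u) -> s = u);
  edges_meet : forall v w pv pw,
    parent T v = Some pv -> parent T w = Some pw -> v <> w ->
    forall s u, 0 <= s <= elen v -> 0 <= u <= elen w ->
    pt_eq n (earc v s) (earc w u) ->
    exists z, (z = pv \/ z = v) /\ (z = pw \/ z = w) /\ pt_eq n (earc v s) (npos z);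
  (* every root-to-node path is a smooth curve: at each interior node p the
     arc-length parametrizations of the incoming and outgoing edges have
     matching derivatives of all orders *)
  path_smooth : forall v p, parent T v = Some p -> parent T p <> None ->
    forall (q m : nat), (1 <= q)%nat -> (m < n)%nat ->
    Derive_n (fun s => earc p s m) q (elen p) = Derive_n (fun s => earc v s m) q 0
}.

Arguments npos {n T}.
Arguments earc {n T}.
Arguments elen {n T}.

(** oriented varifold inner product (Gaussian kernels) of two arc-length
    parametrized curves c on [0,L] and c' on [0,L'] *)
Definition vip (n : nat) (sx st : R) (c : curve) (L : R) (c' : curve) (L' : R) : R :=
  RInt (fun s =>
    RInt (fun u =>
      exp (- dist2 n (c s) (c' u) / sx ^ 2)
      * exp (- dist2 n (tvec c s) (tvec c' u) / st ^ 2)) 0 L') 0 L.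

(* Main.v *)
Require Import Defs.
From Stdlib Require Import Reals Lra Lia List.
From Coquelicot Require Import Coquelicot.
Import ListNotations.
Open Scope R_scope.

Lemma smooth_d1 f : smooth_fun f -> forall x, ex_derive f x.
Proof. intros H x. exact (H 1%nat x). Qed.
Lemma smooth_d2 f : smooth_fun f -> forall x, ex_derive (Derive f) x.
Proof. intros H x. exact (H 2%nat x). Qed.
Lemma smooth_d3 f : smooth_fun f -> forall x, ex_derive (Derive (Derive f)) x.
Proof. intros H x. exact (H 3%nat x). Qed.

Lemma cont_pt_of_ex f x : ex_derive f x -> continuity_pt f x.
Proof. intros H. apply continuity_pt_filterlim. exact (ex_derive_continuous f x H). Qed.

Lemma lip_bound (f : R -> R) (L K : R) :
  (forall x, ex_derive f x) ->
  (forall y, 0 <= y <= L -> Rabs (Derive f y) <= K) ->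
  forall s u, 0 <= s <= L -> 0 <= u <= L -> Rabs (f s - f u) <= K * Rabs (s - u).
Proof.
  intros Hd HK s u Hs Hu.
  destruct (MVT_gen f u s (Derive f)) as [c [Hc Heq]].
  - intros x _. apply Derive_correct, Hd.
  - intros x _. apply cont_pt_of_ex, Hd.
  - rewrite Heq, Rabs_mult. apply Rmult_le_compat_r; [apply Rabs_pos|].
    apply HK. split.
    + apply Rle_trans with (Rmin u s); [apply Rmin_glb; lra | apply Hc].
    + apply Rle_trans with (Rmax u s); [apply Hc | apply Rmax_lub; lra].
Qed.

Lemma bound_compact (g : R -> R) a b : a <= b ->
  (forall x, continuity_pt g x) -> exists K, 0 <= K /\ forall x, a <= x <= b -> Rabs (g x) <= K.
Proof.
  intros Hab Hc.
  destruct (continuity_ab_maj (fun x => Rabs (g x)) a b Hab) as [M [HM _]].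
  - intros c _. apply (continuity_pt_comp g Rabs); [apply Hc | apply Rcontinuity_abs].
  - exists (Rabs (g M)). split; [apply Rabs_pos|]. exact HM.
Qed.

Definition sumseq (f : nat -> R) (a n : nat) := fold_right Rplus 0 (map f (seq a n)).

Lemma sumseq_le f g a n : (forall m, (a <= m < a + n)%nat -> f m <= g m) ->
  sumseq f a n <= sumseq g a n.
Proof.
  revert a; induction n as [|n IH]; intros a H; unfold sumseq; simpl; [lra|].
  apply Rplus_le_compat; [apply H; lia|]. apply IH. intros m Hm; apply H; lia.
Qed.

Lemma sumseq_const c a n : sumseq (fun _ => c) a n = INR n * c.
Proof.
  revert a; induction n as [|n IH]; intros a; unfold sumseq in *; cbn [seq map fold_right].
  - simpl; lra.
  - rewrite IH. rewrite S_INR. ring.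
Qed.

Lemma sumseq_nonneg f a n : (forall m, (a <= m < a + n)%nat -> 0 <= f m) -> 0 <= sumseq f a n.
Proof.
  intros H. rewrite <- (Rmult_0_r (INR n)), <- (sumseq_const 0 a n). apply sumseq_le. exact H.
Qed.

Lemma sumseq_zero f a n : (forall m, (a <= m < a + n)%nat -> 0 <= f m) -> sumseq f a n = 0 ->
  forall m, (a <= m < a + n)%nat -> f m = 0.
Proof.
  revert a; induction n as [|n IH]; intros a H Hs m Hm; [lia|].
  unfold sumseq in Hs; simpl in Hs.
  assert (H0 : 0 <= f a) by (apply H; lia).
  assert (H1 : 0 <= sumseq f (S a) n) by (apply sumseq_nonneg; intros; apply H; lia).
  unfold sumseq in H1.
  destruct (Nat.eq_dec m a) as [->|Hne]; [lra|].
  apply (IH (S a)); [intros; apply H; lia | unfold sumseq; lra | lia].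
Qed.

Lemma dist2_sum n p q : dist2 n p q = sumseq (fun m => (p m - q m) ^ 2) 0 n.
Proof. reflexivity. Qed.

Lemma dist2_nonneg n p q : 0 <= dist2 n p q.
Proof. rewrite dist2_sum. apply sumseq_nonneg. intros; apply pow2_ge_0. Qed.

Lemma dist2_le n p q C : (forall m, (m < n)%nat -> (p m - q m) ^ 2 <= C) -> dist2 n p q <= INR n * C.
Proof. intros H. rewrite dist2_sum, <- (sumseq_const C 0). apply sumseq_le. intros; apply H; lia. Qed.

Lemma dist2_ext n p q p' q' : (forall m, (m < n)%nat -> p m = p' m) ->
  (forall m, (m < n)%nat -> q m = q' m) -> dist2 n p q = dist2 n p' q'.
Proof.
  intros Hp Hq. rewrite !dist2_sum. apply Rle_antisym; apply sumseq_le; intros m Hm;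
  rewrite (Hp m), (Hq m) by lia; lra.
Qed.

Lemma dist2_zero n p q : dist2 n p q = 0 -> forall m, (m < n)%nat -> p m = q m.
Proof.
  intros H m Hm. rewrite dist2_sum in H.
  pose proof (sumseq_zero _ 0 n (fun m _ => pow2_ge_0 _) H m ltac:(lia)) as H'.
  simpl in H'. nra.
Qed.

Lemma cont2d_sumseq (g : nat -> R -> R -> R) x y a n :
  (forall m, (a <= m < a + n)%nat -> continuity_2d_pt (g m) x y) ->
  continuity_2d_pt (fun s u => sumseq (fun m => g m s u) a n) x y.
Proof.
  revert a; induction n as [|n IH]; intros a H.
  - exact (continuity_2d_pt_const x y 0).
  - unfold sumseq; cbn [seq map fold_right].
    apply continuity_2d_pt_plus; [apply H; lia|].
    apply (IH (S a)). intros; apply H; lia.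
Qed.

Lemma cont2d_fst (f : R -> R) x y : continuity_pt f x -> continuity_2d_pt (fun s _ => f s) x y.
Proof.
  intros H. apply (continuity_1d_2d_pt_comp f (fun u _ => u)); [exact H | apply continuity_2d_pt_id1].
Qed.
Lemma cont2d_snd (f : R -> R) x y : continuity_pt f y -> continuity_2d_pt (fun _ u => f u) x y.
Proof.
  intros H. apply (continuity_1d_2d_pt_comp f (fun _ v => v)); [exact H | apply continuity_2d_pt_id2].
Qed.

Lemma cont2d_dist2 n (P Q : R -> point) x y :
  (forall m, (m < n)%nat -> continuity_pt (fun s => P s m) x) ->
  (forall m, (m < n)%nat -> continuity_pt (fun s => Q s m) y) ->
  continuity_2d_pt (fun s u => dist2 n (P s) (Q u)) x y.
Proof.
  intros HP HQ. apply (cont2d_sumseq (fun m s u => (P s m - Q u m) ^ 2)).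
  intros m Hm.
  apply (continuity_2d_pt_ext (fun s u => (P s m - Q u m) * (P s m - Q u m))).
  { intros; ring. }
  apply continuity_2d_pt_mult; apply continuity_2d_pt_minus;
    [apply cont2d_fst, HP; lia | apply cont2d_snd, HQ; lia | apply cont2d_fst, HP; lia | apply cont2d_snd, HQ; lia].
Qed.

Lemma cont2d_kernel n (P Q P' Q' : R -> point) sx st x y :
  (forall m, (m < n)%nat -> continuity_pt (fun s => P s m) x) ->
  (forall m, (m < n)%nat -> continuity_pt (fun s => Q s m) y) ->
  (forall m, (m < n)%nat -> continuity_pt (fun s => P' s m) x) ->
  (forall m, (m < n)%nat -> continuity_pt (fun s => Q' s m) y) ->
  continuity_2d_pt (fun s u => exp (- dist2 n (P s) (Q u) / sx ^ 2)
      * exp (- dist2 n (P' s) (Q' u) / st ^ 2)) x y.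
Proof.
  intros H1 H2 H3 H4.
  apply continuity_2d_pt_mult.
  - apply (continuity_1d_2d_pt_comp exp (fun s u => - dist2 n (P s) (Q u) / sx ^ 2)).
    + apply derivable_continuous_pt, derivable_pt_exp.
    + unfold Rdiv. apply continuity_2d_pt_mult; [apply continuity_2d_pt_opp, cont2d_dist2; auto | apply continuity_2d_pt_const].
  - apply (continuity_1d_2d_pt_comp exp (fun s u => - dist2 n (P' s) (Q' u) / st ^ 2)).
    + apply derivable_continuous_pt, derivable_pt_exp.
    + unfold Rdiv. apply continuity_2d_pt_mult; [apply continuity_2d_pt_opp, cont2d_dist2; auto | apply continuity_2d_pt_const].
Qed.

Lemma ball_R x e y : ball x e y <-> Rabs (y - x) < e.
Proof. reflexivity. Qed.

Lemma cont_snd_of_2d F x y : continuity_2d_pt F x y -> continuous (F x) y.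
Proof.
  intros H. apply continuity_pt_filterlim, continuity_pt_locally. intros eps.
  destruct (H eps) as [d Hd]. exists d. intros v Hv.
  apply Hd; [rewrite Rminus_diag, Rabs_R0; apply cond_pos | exact Hv].
Qed.

Lemma ex_RInt_inner (F : R -> R -> R) : (forall s u, continuity_2d_pt F s u) ->
  forall s a b, ex_RInt (F s) a b.
Proof. intros H s a b. apply (ex_RInt_continuous (V:=R_CompleteNormedModule)). intros z _. apply cont_snd_of_2d, H. Qed.

Lemma cont_param (F : R -> R -> R) (L : R) : (forall s u, continuity_2d_pt F s u) -> 0 <= L ->
  forall s0, continuous (fun s => RInt (F s) 0 L) s0.
Proof.
  intros H HL s0. apply continuity_pt_filterlim, continuity_pt_locally. intros eps.
  assert (He : 0 < eps / (L + 1)) by (apply Rdiv_lt_0_compat; [apply cond_pos | lra]).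
  destruct (uniform_continuity_2d_1d' F 0 L s0 (fun x _ => H s0 x) (mkposreal _ He)) as [d Hd].
  exists d. intros s Hs. rewrite ball_R in Hs. simpl in Hd.
  assert (Hb : forall u, 0 <= u <= L -> Rabs (F s u - F s0 u) < eps / (L + 1)).
  { intros u Hu. pose proof (cond_pos d). apply Rabs_lt_between' in Hs.
    apply Hd; try lra. rewrite Rminus_diag, Rabs_R0; apply cond_pos. }
  assert (I1 := ex_RInt_inner F H s 0 L). assert (I0 := ex_RInt_inner F H s0 0 L).
  assert (Ic : forall c : R, ex_RInt (V:=R_NormedModule) (fun _ => c) 0 L) by (intros; apply ex_RInt_const).
  assert (Hup : RInt (F s) 0 L <= RInt (fun u => F s0 u + eps / (L + 1)) 0 L).
  { apply RInt_le; auto. apply (ex_RInt_plus (F s0) (fun _ => eps / (L+1))); auto.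
    intros u Hu. specialize (Hb u ltac:(lra)). apply Rabs_lt_between in Hb. lra. }
  assert (Hlo : RInt (fun u => F s0 u - eps / (L + 1)) 0 L <= RInt (F s) 0 L).
  { apply RInt_le; auto. apply (ex_RInt_minus (F s0) (fun _ => eps / (L+1))); auto.
    intros u Hu. specialize (Hb u ltac:(lra)). apply Rabs_lt_between in Hb. lra. }
  rewrite (RInt_plus (F s0) (fun _ => eps / (L+1))) in Hup by auto.
  rewrite (RInt_minus (F s0) (fun _ => eps / (L+1))) in Hlo by auto.
  rewrite RInt_const in Hup, Hlo.
  cbv [plus minus scal opp] in Hup, Hlo; simpl in Hup, Hlo.
  cbv [mult] in Hup, Hlo; simpl in Hup, Hlo.
  assert (Hk : (L - 0) * (eps / (L + 1)) < eps).
  { replace ((L - 0) * (eps / (L + 1))) with (eps * (L / (L+1))) by (field; lra).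
    pose proof (cond_pos eps).
    assert (L / (L+1) < 1) by (apply Rmult_lt_reg_r with (L+1); [lra|]; unfold Rdiv; rewrite Rmult_assoc, Rinv_l; lra).
    nra. }
  apply Rabs_lt_between. lra.
Qed.

Lemma ex_RInt_outer (F : R -> R -> R) (L : R) : (forall s u, continuity_2d_pt F s u) -> 0 <= L ->
  forall a b, ex_RInt (fun s => RInt (F s) 0 L) a b.
Proof. intros H HL a b. apply (ex_RInt_continuous (V:=R_CompleteNormedModule)). intros z _. apply cont_param; auto. Qed.

Lemma RInt_cst (c a b : R) : RInt (V:=R_CompleteNormedModule) (fun _ => c) a b = (b - a) * c.
Proof. rewrite RInt_const. reflexivity. Qed.

Lemma exc (c a b : R) : ex_RInt (V:=R_NormedModule) (fun _ => c) a b.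
Proof. apply ex_RInt_const. Qed.

Lemma chasles (f : R -> R) a b c : ex_RInt f a b -> ex_RInt f b c ->
  RInt f a c = RInt f a b + RInt f b c.
Proof. intros H1 H2. rewrite <- (RInt_Chasles f a b c H1 H2). reflexivity. Qed.

Section Est.
Variable F : R -> R -> R.
Hypothesis Fc : forall s u, continuity_2d_pt F s u.
Hypothesis F0 : forall s u, 0 <= F s u.
Hypothesis F1 : forall s u, F s u <= 1.

Let Ii := ex_RInt_inner F Fc.

Lemma inner_nonneg s a b : a <= b -> 0 <= RInt (F s) a b.
Proof. intros Hab. apply RInt_ge_0; auto. Qed.

Lemma outer_nonneg L L' : 0 <= L -> 0 <= L' -> 0 <= RInt (fun s => RInt (F s) 0 L') 0 L.
Proof.
  intros HL HL'. apply RInt_ge_0; auto. apply ex_RInt_outer; auto.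
  intros; apply inner_nonneg; auto.
Qed.

Lemma self_lower L h m : 0 < h -> 2 * h <= L ->
  (forall s u, 0 <= s <= L -> 0 <= u <= L -> Rabs (s - u) <= h -> m <= F s u) ->
  (L / 2) * (h * m) <= RInt (fun s => RInt (F s) 0 L) 0 L.
Proof.
  intros Hh HL Hm.
  assert (Io := ex_RInt_outer F L Fc ltac:(lra)).
  rewrite (chasles _ 0 (L/2) L) by auto.
  assert (0 <= RInt (fun s => RInt (F s) 0 L) (L / 2) L).
  { apply RInt_ge_0; auto; [lra|]. intros; apply inner_nonneg; lra. }
  assert ((L/2) * (h * m) <= RInt (fun s => RInt (F s) 0 L) 0 (L / 2)).
  { replace ((L/2) * (h * m)) with ((L/2 - 0) * (h * m)) by ring.
    rewrite <- RInt_cst. apply RInt_le; auto; try lra; try apply exc.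
    intros s Hs.
    rewrite (chasles _ 0 s L), (chasles _ s (s + h) L) by auto.
    assert (0 <= RInt (F s) 0 s) by (apply inner_nonneg; lra).
    assert (0 <= RInt (F s) (s + h) L) by (apply inner_nonneg; lra).
    assert (h * m <= RInt (F s) s (s + h)).
    { replace (h * m) with ((s + h - s) * m) by ring. rewrite <- RInt_cst.
      apply RInt_le; auto; try lra; try apply exc.
      intros u Hu. apply Hm; try lra. rewrite Rabs_left1; lra. }
    lra. }
  lra.
Qed.

Lemma cross_upper Lj Lk tau eta : 0 < tau -> tau <= Lj -> tau <= Lk -> 0 <= eta ->
  (forall s u, 0 <= s <= Lj -> 0 <= u <= Lk -> tau <= s + u -> F s u <= eta) ->
  RInt (fun s => RInt (F s) 0 Lk) 0 Lj <= tau ^ 2 + Lj * Lk * eta.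
Proof.
  intros Ht HLj HLk He Hb.
  assert (Io := ex_RInt_outer F Lk Fc ltac:(lra)).
  rewrite (chasles _ 0 tau Lj) by auto.
  assert (RInt (fun s => RInt (F s) 0 Lk) 0 tau <= (tau - 0) * (tau + Lk * eta)).
  { rewrite <- RInt_cst. apply RInt_le; auto; try lra; try apply exc.
    intros s Hs. rewrite (chasles _ 0 tau Lk) by auto.
    assert (RInt (F s) 0 tau <= (tau - 0) * 1).
    { rewrite <- RInt_cst. apply RInt_le; auto; try lra; try apply exc. }
    assert (RInt (F s) tau Lk <= (Lk - tau) * eta).
    { rewrite <- RInt_cst. apply RInt_le; auto; try lra; try apply exc.
      intros u Hu; apply Hb; lra. }
    nra. }
  assert (RInt (fun s => RInt (F s) 0 Lk) tau Lj <= (Lj - tau) * (Lk * eta)).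
  { rewrite <- RInt_cst. apply RInt_le; auto; try lra; try apply exc.
    intros s Hs. replace (Lk * eta) with ((Lk - 0) * eta) by ring. rewrite <- RInt_cst.
    apply RInt_le; auto; try lra; try apply exc. intros u Hu; apply Hb; lra. }
  nra.
Qed.
End Est.

Lemma pow_exp x N : exp x ^ N = exp (INR N * x).
Proof.
  induction N as [|N IH]; [simpl; rewrite Rmult_0_l, exp_0; ring|].
  rewrite <- tech_pow_Rmult, IH, S_INR, <- exp_plus. f_equal; ring.
Qed.

Lemma taylor_term y N : 0 <= y -> y ^ N / INR (Factorial.fact N) <= exp y.
Proof.
  intros Hy. pose proof (exp_ge_taylor y N Hy) as H.
  destruct N as [|N].
  - simpl in *. lra.
  - simpl sum_f_R0 in H.
    assert (0 <= sum_f_R0 (fun k => y ^ k / INR (Factorial.fact k)) N).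
    { apply cond_pos_sum. intros k. apply Rdiv_le_0_compat; [apply pow_le; lra | apply INR_fact_lt_0]. }
    change (y ^ S N / INR (Factorial.fact (S N))) with (y * y ^ N / INR (Factorial.fact N + N * Factorial.fact N)). lra.
Qed.

Lemma key_exp a D k2 L : 0 < a < 2 -> 0 < D -> 0 < k2 -> 0 <= L ->
  exists delta, 0 < delta /\ forall sg, 0 < sg < delta ->
    L * exp (- Rpower (D * sg) a / (k2 * sg) ^ 2) <= D * sg.
Proof.
  intros Ha HD Hk HL.
  set (p := 2 - a).
  destruct (INR_archimed p 2 ltac:(unfold p; lra)) as [N HN].
  set (A := exp (a * ln D) / k2 ^ 2).
  assert (HA : 0 < A) by (unfold A; apply Rdiv_lt_0_compat; [apply exp_pos | apply pow_lt; lra]).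
  assert (HfN : 0 < INR (Factorial.fact N)) by apply INR_fact_lt_0.
  set (B := INR (Factorial.fact N) / A ^ N).
  assert (HB : 0 < B) by (unfold B; apply Rdiv_lt_0_compat; [lra | apply pow_lt; lra]).
  exists (Rmin 1 (D / (L * B + 1))). split.
  { apply Rmin_pos; [lra|]. apply Rdiv_lt_0_compat; [lra|]. nra. }
  intros sg [Hs Hsd].
  assert (Hs1 : sg < 1) by (eapply Rlt_le_trans; [exact Hsd | apply Rmin_l]).
  assert (Hs2 : sg < D / (L * B + 1)) by (eapply Rlt_le_trans; [exact Hsd | apply Rmin_r]).
  set (l := ln sg).
  assert (Hl : l < 0) by (unfold l; rewrite <- ln_1; apply ln_increasing; lra).
  assert (Hsg : sg = exp l) by (unfold l; rewrite exp_ln; lra).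
  set (y := Rpower (D * sg) a / (k2 * sg) ^ 2).
  assert (Hy : y = A * exp ((a - 2) * l)).
  { unfold y, A, Rpower. rewrite ln_mult by lra. fold l.
    rewrite Hsg at 1.
    replace ((k2 * exp l) ^ 2) with (k2 ^ 2 * (exp l * exp l)) by ring.
    rewrite <- exp_plus.
    replace (a * (ln D + l)) with (a * ln D + ((a - 2) * l + (l + l))) by ring.
    rewrite !exp_plus. field. pose proof (exp_pos l). split; lra. }
  assert (Hy0 : 0 < y) by (rewrite Hy; apply Rmult_lt_0_compat; [lra | apply exp_pos]).
  assert (Hexp : exp (- y) <= B * sg ^ 2).
  { pose proof (taylor_term y N ltac:(lra)) as T.
    rewrite exp_Ropp.
    assert (HyN : 0 < y ^ N) by (apply pow_lt; lra).
    assert (E1 : / exp y <= INR (Factorial.fact N) / y ^ N).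
    { apply Rmult_le_reg_r with (exp y); [apply exp_pos|].
      rewrite Rinv_l by (apply Rgt_not_eq, exp_pos).
      apply Rmult_le_reg_l with (y ^ N / INR (Factorial.fact N)).
      { apply Rdiv_lt_0_compat; lra. }
      replace (y ^ N / INR (Factorial.fact N) * (INR (Factorial.fact N) / y ^ N * exp y)) with (exp y) by (field; lra).
      nra. }
    eapply Rle_trans; [exact E1|].
    rewrite Hy, Rpow_mult_distr, pow_exp.
    unfold B.
    replace (INR (Factorial.fact N) / (A ^ N * exp (INR N * ((a - 2) * l))))
      with (INR (Factorial.fact N) / A ^ N * exp (INR N * (p * l))).
    2: { unfold p. replace (INR N * ((2 - a) * l)) with (- (INR N * ((a - 2) * l))) by ring.
         rewrite exp_Ropp. field. split; [apply Rgt_not_eq, exp_pos | apply pow_nonzero; lra]. }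
    apply Rmult_le_compat_l; [apply Rlt_le, HB|].
    rewrite Hsg, pow_exp. apply Rlt_le, exp_increasing. simpl INR.
    assert (INR N * p * l < 2 * l) by nra.
    replace (INR N * (p * l)) with (INR N * p * l) by ring. lra. }
  unfold y in Hexp.
  assert (L * exp (- (Rpower (D * sg) a / (k2 * sg) ^ 2)) <= L * (B * sg ^ 2)) by (apply Rmult_le_compat_l; lra).
  assert (sg * (L * B + 1) < D).
  { apply Rmult_lt_reg_r with (/ (L * B + 1)).
    - apply Rinv_0_lt_compat; nra.
    - rewrite Rmult_assoc, Rinv_r by nra. rewrite Rmult_1_r. exact Hs2. }
  replace (- Rpower (D * sg) a / (k2 * sg) ^ 2) with (- (Rpower (D * sg) a / (k2 * sg) ^ 2)) by (unfold Rdiv; ring).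
  assert (L * (B * sg ^ 2) <= D * sg) by nra.
  lra.
Qed.

Lemma sumseq_term f a n m : (forall k, (a <= k < a + n)%nat -> 0 <= f k) ->
  (a <= m < a + n)%nat -> f m <= sumseq f a n.
Proof.
  revert a; induction n as [|n IH]; intros a H Hm; [lia|].
  unfold sumseq; cbn [seq map fold_right].
  destruct (Nat.eq_dec m a) as [->|Hne].
  - assert (0 <= sumseq f (S a) n) by (apply sumseq_nonneg; intros; apply H; lia).
    unfold sumseq in H0; lra.
  - assert (0 <= f a) by (apply H; lia).
    assert (f m <= sumseq f (S a) n) by (apply IH; [intros; apply H; lia | lia]).
    unfold sumseq in H1; lra.
Qed.

Lemma dist2_term n p q m : (m < n)%nat -> (p m - q m) ^ 2 <= dist2 n p q.
Proof.
  intros Hm. rewrite dist2_sum. apply (sumseq_term (fun m => (p m - q m) ^ 2)); [intros; apply pow2_ge_0 | lia].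
Qed.

Lemma finite_max n (P : nat -> R -> Prop) :
  (forall m K K', K <= K' -> P m K -> P m K') ->
  (forall m, (m < n)%nat -> exists K, 0 <= K /\ P m K) ->
  exists K, 0 <= K /\ forall m, (m < n)%nat -> P m K.
Proof.
  intros Hmono. induction n as [|n IH]; intros H.
  - exists 0. split; [lra | intros; lia].
  - destruct IH as [K1 [HK1 H1]]; [intros; apply H; lia|].
    destruct (H n ltac:(lia)) as [K2 [HK2 H2]].
    exists (Rmax K1 K2). split; [apply Rle_trans with K1; [lra | apply Rmax_l]|].
    intros m Hm. destruct (Nat.eq_dec m n) as [->|Hne].
    + apply Hmono with K2; [apply Rmax_r | exact H2].
    + apply Hmono with K1; [apply Rmax_l | apply H1; lia].
Qed.

Section Curve.
Variable n : nat.
Variable c : curve.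
Variable L : R.
Hypothesis Hsm : forall m, (m < n)%nat -> smooth_fun (fun s => c s m).
Hypothesis Hunit : forall s, 0 <= s <= L -> dist2 n (tvec c s) zero_pt = 1.

Lemma curve_cont m x : (m < n)%nat -> continuity_pt (fun s => c s m) x.
Proof. intros Hm. apply cont_pt_of_ex, smooth_d1, Hsm, Hm. Qed.

Lemma tvec_cont m x : (m < n)%nat -> continuity_pt (fun s => tvec c s m) x.
Proof. intros Hm. unfold tvec. apply cont_pt_of_ex, (smooth_d2 _ (Hsm m Hm)). Qed.

Lemma curve_lip m s u : (m < n)%nat -> 0 <= s <= L -> 0 <= u <= L ->
  Rabs (c s m - c u m) <= Rabs (s - u).
Proof.
  intros Hm Hs Hu. rewrite <- (Rmult_1_l (Rabs (s - u))).
  apply (lip_bound (fun t => c t m) L 1); auto.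
  - apply smooth_d1, Hsm, Hm.
  - intros y Hy. pose proof (dist2_term n (tvec c y) zero_pt m Hm) as H.
    rewrite Hunit in H by exact Hy. unfold zero_pt, tvec in H.
    apply Rabs_le. nra.
Qed.

Lemma tvec_lip : exists K, 0 <= K /\ forall m s u, (m < n)%nat -> 0 <= s <= L -> 0 <= u <= L ->
  Rabs (tvec c s m - tvec c u m) <= K * Rabs (s - u).
Proof.
  cut (exists K, 0 <= K /\ forall m, (m < n)%nat -> forall s u, 0 <= s <= L -> 0 <= u <= L ->
    Rabs (tvec c s m - tvec c u m) <= K * Rabs (s - u)).
  { intros [K [HK H]]. exists K. split; auto. }
  apply (finite_max n (fun m K => forall s u, 0 <= s <= L -> 0 <= u <= L ->
      Rabs (tvec c s m - tvec c u m) <= K * Rabs (s - u))).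
  - intros m K K' HK H s u Hs Hu. eapply Rle_trans; [apply H; auto|].
    apply Rmult_le_compat_r; [apply Rabs_pos | exact HK].
  - intros m Hm.
    assert (HL : 0 <= L \/ L < 0) by lra. destruct HL as [HL|HL].
    2: { exists 0. split; [lra|]. intros; lra. }
    destruct (bound_compact (Derive (Derive (fun t => c t m))) 0 L HL) as [K [HK HKb]].
    { intros x. apply cont_pt_of_ex, (smooth_d3 _ (Hsm m Hm)). }
    exists K. split; [exact HK|]. intros s u Hs Hu. unfold tvec.
    apply (lip_bound (Derive (fun t => c t m)) L K); auto.
    apply (smooth_d2 _ (Hsm m Hm)).
Qed.
End Curve.

Lemma exp_mono x y : x <= y -> exp x <= exp y.
Proof. intros H. destruct (Rle_lt_or_eq_dec _ _ H) as [H' | ->]; [apply Rlt_le, exp_increasing, H' | lra]. Qed.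

Definition ker n sx st (c c' : curve) (s u : R) :=
  exp (- dist2 n (c s) (c' u) / sx ^ 2) * exp (- dist2 n (tvec c s) (tvec c' u) / st ^ 2).

Lemma vip_eq n sx st c L c' L' :
  vip n sx st c L c' L' = RInt (fun s => RInt (ker n sx st c c' s) 0 L') 0 L.
Proof. reflexivity. Qed.

Lemma ker_nonneg n sx st c c' s u : 0 <= ker n sx st c c' s u.
Proof. unfold ker. apply Rmult_le_pos; apply Rlt_le, exp_pos. Qed.

Lemma expdiv_le1 x sg : 0 <= x -> 0 < sg -> exp (- x / sg ^ 2) <= 1.
Proof.
  intros Hx Hs. rewrite <- exp_0. apply exp_mono.
  assert (0 <= x / sg ^ 2) by (apply Rdiv_le_0_compat; [lra | apply pow_lt; lra]).
  unfold Rdiv in *. lra.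
Qed.

Lemma ker_le1 n sx st c c' s u : 0 < sx -> 0 < st -> ker n sx st c c' s u <= 1.
Proof.
  intros H1 H2. unfold ker.
  pose proof (expdiv_le1 _ _ (dist2_nonneg n (c s) (c' u)) H1).
  pose proof (expdiv_le1 _ _ (dist2_nonneg n (tvec c s) (tvec c' u)) H2).
  pose proof (exp_pos (- dist2 n (c s) (c' u) / sx ^ 2)).
  pose proof (exp_pos (- dist2 n (tvec c s) (tvec c' u) / st ^ 2)). nra.
Qed.

Lemma ker_cont n sx st c c' :
  (forall m, (m < n)%nat -> smooth_fun (fun s => c s m)) ->
  (forall m, (m < n)%nat -> smooth_fun (fun s => c' s m)) ->
  forall s u, continuity_2d_pt (ker n sx st c c') s u.
Proof.
  intros H1 H2 s u. unfold ker.
  apply (cont2d_kernel n c c' (tvec c) (tvec c') sx st s u);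
    intros m Hm; [apply (curve_cont n c) | apply (curve_cont n c') | apply (tvec_cont n c) | apply (tvec_cont n c')]; auto.
Qed.

Lemma tau0_exists n (cj ck : curve) (Lj Lk rho a : R) (xi : point) :
  0 < Lj -> 0 < Lk -> 0 < rho -> 0 < a ->
  (forall m, (m < n)%nat -> smooth_fun (fun s => cj s m)) ->
  (forall s, 0 <= s <= Lj -> dist2 n (tvec cj s) zero_pt = 1) ->
  pt_eq n (cj 0) xi ->
  (forall s s' u u',
      0 <= s <= Lj -> 0 <= s' <= Lj -> 0 <= u <= Lk -> 0 <= u' <= Lk ->
      s + u <= s' + u' ->
      edist n (tvec cj s) (tvec ck u) <= edist n (tvec cj s') (tvec ck u')) ->
  (forall s, 0 < s <= Lj -> edist n (cj s) xi < rho ->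
        Rpower s a <= edist n (tvec cj s) (tvec cj 0)) ->
  exists tau0, 0 < tau0 /\ tau0 <= Lj /\ tau0 <= Lk /\
    forall tau, 0 < tau <= tau0 -> forall s u, 0 <= s <= Lj -> 0 <= u <= Lk -> tau <= s + u ->
      Rpower tau a <= edist n (tvec cj s) (tvec ck u).
Proof.
  intros HLj HLk Hrho Ha Hsm Hun H0 A2 A3.
  set (d0 := edist n (tvec cj 0) (tvec ck 0)).
  assert (Hd0 : 0 <= d0) by apply sqrt_pos.
  destruct (Rle_lt_or_eq_dec _ _ Hd0) as [Hpos | Hzero].
  - set (t1 := Rpower d0 (/ a)).
    assert (Ht1 : 0 < t1) by apply exp_pos.
    exists (Rmin (Rmin Lj Lk) t1).
    assert (Hm1 := Rmin_l (Rmin Lj Lk) t1). assert (Hm2 := Rmin_r (Rmin Lj Lk) t1).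
    assert (Hm3 := Rmin_l Lj Lk). assert (Hm4 := Rmin_r Lj Lk).
    split; [apply Rmin_pos; [apply Rmin_pos|]; lra|].
    split; [lra|]. split; [lra|].
    intros tau Htau s u Hs Hu Hsu.
    apply Rle_trans with d0.
    + apply Rle_trans with (Rpower t1 a).
      * apply Rle_Rpower_l; lra.
      * unfold t1. rewrite Rpower_mult, Rinv_l by lra. rewrite Rpower_1; lra.
    + apply A2; lra.
  - assert (Hz : dist2 n (tvec cj 0) (tvec ck 0) = 0).
    { apply sqrt_eq_0; [apply dist2_nonneg|]. symmetry; exact Hzero. }
    pose proof (dist2_zero _ _ _ Hz) as Heq.
    set (t1 := rho / (INR n + 1)).
    assert (Hn : 0 <= INR n) by apply pos_INR.
    assert (Ht1 : 0 < t1) by (unfold t1; apply Rdiv_lt_0_compat; lra).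
    exists (Rmin (Rmin Lj Lk) t1).
    assert (Hm1 := Rmin_l (Rmin Lj Lk) t1). assert (Hm2 := Rmin_r (Rmin Lj Lk) t1).
    assert (Hm3 := Rmin_l Lj Lk). assert (Hm4 := Rmin_r Lj Lk).
    split; [apply Rmin_pos; [apply Rmin_pos|]; lra|].
    split; [lra|]. split; [lra|].
    intros tau Htau s u Hs Hu Hsu.
    apply Rle_trans with (edist n (tvec cj tau) (tvec ck 0)); [| apply A2; lra].
    assert (E : edist n (tvec cj tau) (tvec ck 0) = edist n (tvec cj tau) (tvec cj 0)).
    { unfold edist. f_equal. apply dist2_ext; auto. intros m Hm. symmetry. apply Heq, Hm. }
    rewrite E. apply A3; [lra|].
    assert (Hd : dist2 n (cj tau) xi <= INR n * tau ^ 2).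
    { rewrite (dist2_ext n (cj tau) xi (cj tau) (cj 0)); auto.
      2: { intros m Hm. symmetry. apply H0, Hm. }
      apply dist2_le. intros m Hm.
      pose proof (curve_lip n cj Lj Hsm Hun m tau 0 Hm ltac:(lra) ltac:(lra)) as Hl.
      rewrite Rminus_0_r, (Rabs_pos_eq tau) in Hl by lra.
      apply Rabs_le_between in Hl. nra. }
    unfold edist. rewrite <- (sqrt_Rsqr rho) by lra.
    apply Rle_lt_trans with (sqrt (INR n * tau ^ 2)).
    + apply sqrt_le_1_alt, Hd.
    + apply sqrt_lt_1; [nra | apply Rle_0_sqr |].
      assert (tau <= t1) by lra.
      assert (tau * (INR n + 1) <= rho).
      { unfold t1 in H. apply Rmult_le_reg_r with (/ (INR n + 1)). apply Rinv_0_lt_compat; lra.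
        rewrite Rmult_assoc, Rinv_r by lra. lra. }
      assert (tau * (INR n + 1) * (tau * (INR n + 1)) <= rho * rho) by (apply Rmult_le_compat; nra).
      unfold Rsqr. nra.
Qed.

Lemma div_bound x C t st q : 0 <= x -> 0 <= C -> x <= C * t ^ 2 -> 0 < t -> 0 < q -> q * t <= st ->
  x / st ^ 2 <= C / q ^ 2.
Proof.
  intros Hx HC H Ht Hq Hst.
  assert (Hst0 : 0 < st) by nra.
  apply Rle_trans with (C * t ^ 2 / st ^ 2).
  { unfold Rdiv. apply Rmult_le_compat_r; [apply Rlt_le, Rinv_0_lt_compat, pow_lt; lra | exact H]. }
  replace (C / q ^ 2) with (C * t ^ 2 / (q * t) ^ 2) by (field; lra).
  unfold Rdiv. apply Rmult_le_compat_l; [nra|].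
  apply Rinv_le_contravar; [apply pow_lt; nra|]. apply pow_incr; nra.
Qed.

Lemma div_mono A B C E : 0 <= A <= C -> 0 < E <= B -> A / B <= C / E.
Proof.
  intros H1 H2. unfold Rdiv. apply Rmult_le_compat; try lra.
  - apply Rlt_le, Rinv_0_lt_compat; lra.
  - apply Rinv_le_contravar; lra.
Qed.

Lemma rp_sqrt x a : 0 < x -> (Rpower (sqrt x) a) ^ 2 = Rpower x a.
Proof.
  intros Hx. unfold Rpower.
  assert (ln x = ln (sqrt x) + ln (sqrt x)).
  { rewrite <- ln_mult by (apply sqrt_lt_R0; lra). rewrite sqrt_sqrt; lra. }
  rewrite H. simpl. rewrite Rmult_1_r, <- exp_plus. f_equal. ring.
Qed.

Theorem lemma2 (n : nat) (T : rooted_tree) (E : tree_embedding n T)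
    (i j k : node T) :
  parent T j = Some i -> parent T k = Some i -> j <> k ->
  (* (A2) *)
  (forall s s' u u',
      0 <= s <= elen E j -> 0 <= s' <= elen E j ->
      0 <= u <= elen E k -> 0 <= u' <= elen E k ->
      s + u <= s' + u' ->
      edist n (tvec (earc E j) s) (tvec (earc E k) u)
        <= edist n (tvec (earc E j) s') (tvec (earc E k) u')) ->
  (* (A3) *)
  (exists rho a, 0 < rho /\ 0 < a < 2 /\
     (forall s, 0 < s <= elen E j -> edist n (earc E j s) (npos E i) < rho ->
        Rpower s a <= edist n (tvec (earc E j) s) (tvec (earc E j) 0)) /\
     (forall u, 0 < u <= elen E k -> edist n (earc E k u) (npos E i) < rho ->
        Rpower u a <= edist n (tvec (earc E k) u) (tvec (earc E k) 0))) ->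
  (* conclusion: little-o as sx, st -> 0 with sx ≍ st *)
  forall k1 k2, 0 < k1 -> 0 < k2 ->
  forall eps, 0 < eps ->
  exists delta, 0 < delta /\
    forall sx st, 0 < sx < delta -> 0 < st < delta ->
      k1 * sx <= st <= k2 * sx ->
      Rabs (vip n sx st (earc E j) (elen E j) (earc E k) (elen E k))
        <= eps * (vip n sx st (earc E j) (elen E j) (earc E j) (elen E j)
                  + vip n sx st (earc E k) (elen E k) (earc E k) (elen E k)).
Proof.
  intros Hj Hk Hjk A2 [rho [a [Hrho [Ha [A3j A3k]]]]] k1 k2 Hk1 Hk2 eps Heps.
  destruct (edge_ok n T E j i Hj) as [HLj [Hsmj [Hunj [H0j _]]]].
  destruct (edge_ok n T E k i Hk) as [HLk [Hsmk [Hunk _]]].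
  set (cj := earc E j) in *. set (ck := earc E k) in *.
  set (Lj := elen E j) in *. set (Lk := elen E k) in *.
  destruct (tvec_lip n cj Lj Hsmj) as [Kj [HKj HlipT]].
  destruct (tau0_exists n cj ck Lj Lk rho a (npos E i) HLj HLk Hrho (proj1 Ha) Hsmj Hunj H0j A2 A3j)
    as [tau0 [Ht0 [Ht0j [Ht0k Htau]]]].
  set (m0 := exp (- INR n) * exp (- (INR n * Kj ^ 2 / k1 ^ 2))).
  assert (Hm0 : 0 < m0) by (apply Rmult_lt_0_compat; apply exp_pos).
  set (c0 := Lj / 2 * m0).
  assert (Hc0 : 0 < c0) by (unfold c0; apply Rmult_lt_0_compat; lra).
  set (D := eps * c0 / 2).
  assert (HD : 0 < D) by (unfold D; nra).
  destruct (key_exp a D k2 (Lj * Lk) Ha HD Hk2 ltac:(nra)) as [d1 [Hd1 Hkey]].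
  assert (Ht2 : 0 < tau0 ^ 2 / D) by (apply Rdiv_lt_0_compat; [apply pow_lt|]; lra).
  exists (Rmin d1 (Rmin (Lj / 2) (tau0 ^ 2 / D))).
  split; [apply Rmin_pos; [lra | apply Rmin_pos; lra]|].
  intros sx st [Hsx Hsxd] [Hst _] [Hk1s Hk2s].
  assert (Hs1 : sx < d1) by (eapply Rlt_le_trans; [exact Hsxd | apply Rmin_l]).
  assert (Hs2 : sx < Lj / 2) by (eapply Rlt_le_trans; [exact Hsxd | eapply Rle_trans; [apply Rmin_r | apply Rmin_l]]).
  assert (Hs3 : sx < tau0 ^ 2 / D) by (eapply Rlt_le_trans; [exact Hsxd | eapply Rle_trans; [apply Rmin_r | apply Rmin_r]]).
  rewrite !vip_eq.
  assert (Sj : c0 * sx <= RInt (fun s => RInt (ker n sx st cj cj s) 0 Lj) 0 Lj).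
  { replace (c0 * sx) with (Lj / 2 * (sx * m0)) by (unfold c0; ring).
    apply self_lower; try lra.
    - apply ker_cont; auto.
    - apply ker_nonneg.
    - intros s u Hs Hu Hsu. unfold ker, m0.
      apply Rmult_le_compat; try (apply Rlt_le, exp_pos); apply exp_mono.
      + assert (dist2 n (cj s) (cj u) / sx ^ 2 <= INR n / 1 ^ 2).
        { apply (div_bound _ _ sx); try lra; [apply dist2_nonneg | apply pos_INR |].
          apply dist2_le. intros m Hm.
          pose proof (curve_lip n cj Lj Hsmj Hunj m s u Hm Hs Hu) as Hl.
          assert (Rabs (cj s m - cj u m) <= sx) by lra.
          apply Rabs_le_between in H. nra. }
        replace (INR n / 1 ^ 2) with (INR n) in H by field.
        unfold Rdiv in *. lra.
      + assert (dist2 n (tvec cj s) (tvec cj u) / st ^ 2 <= INR n * Kj ^ 2 / k1 ^ 2).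
        { apply (div_bound _ _ sx); try lra; [apply dist2_nonneg | pose proof (pos_INR n); nra |].
          replace (INR n * Kj ^ 2 * sx ^ 2) with (INR n * (Kj * sx) ^ 2) by ring.
          apply dist2_le. intros m Hm.
          pose proof (HlipT m s u Hm Hs Hu) as Hl.
          assert (Kj * Rabs (s - u) <= Kj * sx) by (apply Rmult_le_compat_l; lra).
          assert (Rabs (tvec cj s m - tvec cj u m) <= Kj * sx) by lra.
          apply Rabs_le_between in H0. nra. }
        unfold Rdiv in *. lra. }
  assert (Sk : 0 <= RInt (fun s => RInt (ker n sx st ck ck s) 0 Lk) 0 Lk).
  { apply outer_nonneg; try lra.
    - apply ker_cont; auto.
    - apply ker_nonneg. }
  set (tau := sqrt (D * sx)).
  assert (Htau0 : 0 < tau) by (apply sqrt_lt_R0; nra).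
  assert (Htau2 : tau ^ 2 = D * sx) by (unfold tau; simpl; rewrite Rmult_1_r, sqrt_sqrt; nra).
  assert (Htt : tau <= tau0).
  { apply Rlt_le. apply Rsqr_incrst_0; try lra. unfold Rsqr. simpl in Htau2. rewrite Rmult_1_r in Htau2.
    rewrite Htau2. apply Rmult_lt_reg_r with (/ D); [apply Rinv_0_lt_compat; lra|].
    replace (D * sx * / D) with sx by (field; lra). unfold Rdiv in Hs3. simpl in Hs3. lra. }
  set (eta := exp (- Rpower (D * sx) a / (k2 * sx) ^ 2)).
  assert (Cr : RInt (fun s => RInt (ker n sx st cj ck s) 0 Lk) 0 Lj <= tau ^ 2 + Lj * Lk * eta).
  { apply cross_upper; try lra.
    - apply ker_cont; auto.
    - intros; apply ker_le1; lra.
    - apply Rlt_le, exp_pos.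
    - intros s u Hs Hu Hsu. unfold ker, eta.
      pose proof (expdiv_le1 _ _ (dist2_nonneg n (cj s) (ck u)) Hsx).
      pose proof (exp_pos (- dist2 n (cj s) (ck u) / sx ^ 2)).
      assert (exp (- dist2 n (tvec cj s) (tvec ck u) / st ^ 2) <= exp (- Rpower (D * sx) a / (k2 * sx) ^ 2)).
      { apply exp_mono.
        assert (Rpower (D * sx) a / (k2 * sx) ^ 2 <= dist2 n (tvec cj s) (tvec ck u) / st ^ 2).
        { apply div_mono.
          - split; [apply Rlt_le, exp_pos|].
            rewrite <- (rp_sqrt (D * sx) a) by nra. fold tau.
            pose proof (Htau tau (conj Htau0 Htt) s u Hs Hu Hsu) as Hd.
            unfold edist in Hd.
            assert (0 <= Rpower tau a) by (apply Rlt_le, exp_pos).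
            pose proof (dist2_nonneg n (tvec cj s) (tvec ck u)).
            rewrite <- (sqrt_sqrt (dist2 n (tvec cj s) (tvec ck u))) by lra.
            simpl. rewrite Rmult_1_r. apply Rmult_le_compat; lra.
          - split; [apply pow_lt; lra | apply pow_incr; lra]. }
        unfold Rdiv in *. lra. }
      pose proof (exp_pos (- dist2 n (tvec cj s) (tvec ck u) / st ^ 2)). nra. }
  assert (Hkb : Lj * Lk * eta <= D * sx) by (apply Hkey; lra).
  assert (Cr0 : 0 <= RInt (fun s => RInt (ker n sx st cj ck s) 0 Lk) 0 Lj).
  { apply outer_nonneg; try lra.
    - apply ker_cont; auto.
    - apply ker_nonneg. }
  rewrite Rabs_pos_eq by exact Cr0.
  assert (eps * (c0 * sx) = 2 * (D * sx)) by (unfold D; field).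
  assert (eps * (c0 * sx) <= eps * (RInt (fun s => RInt (ker n sx st cj cj s) 0 Lj) 0 Lj
                 + RInt (fun s => RInt (ker n sx st ck ck s) 0 Lk) 0 Lk)) by (apply Rmult_le_compat_l; lra).
  lra.
Qed.
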